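(* Fix an integer $k\geq 2$. For each $n\geq 1$ there exist a set $X_n$ with $|X_n|=n$ and a function $f_n:X_n\to X_n$ such that, as $n\to\infty$, \[\deg(f_n)=k+1+o(1)\quad\text{and}\quad\deg(f_n^k)=n^{1-1/2^{k-1}}(1+o(1)),\] where $f_n^k$ denotes the $k$-fold iterate of $f_n$.
   Context: For finite sets $X,Y$ and a function $f:X\to Y$, the degree of $f$ is $\deg(f)=\frac{1}{|X|}\sum_{y\in Y}|f^{-1}(y)|^2$. *)

(* Defs.v *)
From HB Require Import structures.
From mathcomp Require Import all_boot all_order all_algebra.
From mathcomp Require Import all_classical all_reals all_analysis.
Set Implicit Arguments. Unset Strict Implicit. Unset Printing Implicit Defensive.
Import Order.TTheory GRing.Theory Num.Theory.
Local Open Scope ring_scope.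

Definition deg (R : realType) (X Y : finType) (f : X -> Y) : R :=
  (\sum_(y : Y) (#|[set x | f x == y]|%:R) ^+ 2) / (#|X|%:R).

(* Main.v *)
Require Import Defs.
From HB Require Import structures.
From mathcomp Require Import all_boot all_order all_algebra.
From mathcomp Require Import all_classical all_reals all_analysis.
From mathcomp Require Import zify ring lra.
Import Order.TTheory GRing.Theory Num.Theory.
Import numFieldNormedType.Exports.
Set Implicit Arguments. Unset Strict Implicit. Unset Printing Implicit Defensive.
Set Implicit Arguments. Unset Strict Implicit. Unset Printing Implicit Defensive.

Lemma sum_block m d c y A : 0 < d ->
  \sum_(m <= x < m + A * d) (c + (x - m) %/ d == y) = d * (c <= y < c + A).
Proof.
move=> d0; elim: A => [|A IH]; first by rewrite mul0n addn0 big_geq //; lia.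
rewrite (big_cat_nat _ (n := m + A * d)) ?leq_addr //=; last by rewrite mulSn; lia.
rewrite IH (eq_big_nat _ _ (F2 := fun=> (c + A == y) : nat)); last first.
  move=> x hx; congr (nat_of_bool (_ == _)); congr (_ + _).
  have -> : x - m = A * d + (x - m - A * d) by lia.
  rewrite divnMDl // divn_small ?addn0 //; rewrite mulSn in hx; lia.
rewrite sum_nat_const_nat.
have -> : m + A.+1 * d - (m + A * d) = d by rewrite mulSn; lia.
case: (leqP c y) => h1 /=; last first.
  have -> : (c + A == y) = false by apply/negbTE; lia.
  by rewrite !muln0.
case: eqP => [<-|hne].
- rewrite ltnn; have -> : c + A < c + A.+1 by lia. by rewrite muln0 muln1.
- have -> : (y < c + A.+1) = (y < c + A) by apply/idP/idP; lia.
  by rewrite muln0 addn0.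
Qed.

Lemma sum_eq_ind m n y : \sum_(m <= x < n) (x == y) = (m <= y < n).
Proof.
elim: n => [|n IH]; first by rewrite big_geq // ltn0 andbF.
case: (leqP m n) => hmn.
- rewrite big_nat_recr //= IH; case: eqP => [<-|hne]; first by rewrite hmn ltnn ltnSn.
  by rewrite addn0; congr (nat_of_bool (_ && _)); apply/idP/idP; lia.
- rewrite big_geq //; case: leqP => //= h; lia.
Qed.

Lemma sum_ind lo hi n : lo <= hi -> hi <= n -> \sum_(0 <= y < n) (lo <= y < hi) = hi - lo.
Proof.
move=> h1 h2; rewrite (big_cat_nat _ (n := lo)) //=; last by lia.
rewrite (big_cat_nat _ (m := lo) (n := hi)) //=.
rewrite (eq_big_nat _ _ (F2 := fun=> 0)); last by move=> i hi'; have -> : (lo <= i) = false by apply/negbTE; lia.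
rewrite [X in _ + (X + _)](eq_big_nat _ _ (F2 := fun=> 1)); last by move=> i hi'; have -> : (lo <= i < hi) by lia.
rewrite [X in _ + (_ + X)](eq_big_nat _ _ (F2 := fun=> 0)); last first.
  move=> i hi'; have -> : (i < hi) = false by apply/negbTE; lia.
  by rewrite andbF.

rewrite !sum_nat_const_nat; lia.
Qed.

Section Comb.
Variables (k : nat) (a b : nat -> nat).

Definition sL i := \sum_(j < i) a j.

Lemma sLS i : sL i.+1 = sL i + a i.
Proof. by rewrite /sL big_ord_recr. Qed.

Lemma sL0 : sL 0 = 0. Proof. by rewrite /sL big_ord0. Qed.

Lemma sL_mono i j : i <= j -> sL i <= sL j.
Proof.
move=> /subnK <-; elim: (j - i) => [|m IH] //.
by rewrite addSn sLS (leq_trans IH) // leq_addr.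
Qed.

Fixpoint gl j x := match j with
  | 0 => x
  | j'.+1 => if (sL j'.+1 <= x) && (x < sL j'.+2) then sL j' + (x - sL j'.+1) %/ b j'
             else gl j' x end.

Definition gg := gl k.

Lemma gl_le j x : gl j x <= x.
Proof.
elim: j => [|j IH] //=; case: ifP => // /andP[h1 _].
have := sL_mono (leqnSn j); have := leq_div (x - sL j.+1) (b j); lia.
Qed.

Lemma gl_out j x : (forall j', j' < j -> ~~ ((sL j'.+1 <= x) && (x < sL j'.+2))) -> gl j x = x.
Proof.
elim: j => [|j IH] H //=; rewrite (negbTE (H j (ltnSn j))) IH // => j' hj'.
by apply: H; rewrite ltnS ltnW.
Qed.

Lemma gl_in i j x : i < j -> sL i.+1 <= x < sL i.+2 -> gl j x = sL i + (x - sL i.+1) %/ b i.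
Proof.
move=> hij hx; elim: j hij => [|j IH] // hij /=.
case: (ltngtP i j) hij => [hlt _|hgt|<- _]; last by rewrite hx.
- have : sL i.+2 <= sL j.+1 by apply: sL_mono.
  move: hx => /andP[_ h2] h3.
  have -> : (sL j.+1 <= x) = false by apply/negbTE; rewrite -ltnNge (leq_trans h2 h3).
  by rewrite /= IH.
- by rewrite ltnS leqNgt hgt.
Qed.

Lemma gg0 : gg 0 = 0.
Proof. by have := gl_le k 0; rewrite /gg; lia. Qed.

Hypotheses (ha0 : a 0 = 1) (hab : forall i, i < k -> a i.+1 = a i * b i)
  (hb : forall i, 0 < b i).

Lemma sL1 : sL 1 = 1. Proof. by rewrite sLS sL0 ha0. Qed.

Definition LL y := \sum_(i < k) b i * (sL i <= y < sL i.+1).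

Lemma cnt_tree y m : m <= k -> \sum_(0 <= x < sL m.+1) (gg x == y) =
   (y == 0) + \sum_(i < m) b i * (sL i <= y < sL i.+1).
Proof.
elim: m => [|m IH] hm.
  by rewrite sL1 big_nat1 gg0 big_ord0 addn0 eq_sym.
rewrite (big_cat_nat _ (n := sL m.+1)) //=; last by apply: sL_mono.
rewrite IH ?(ltnW hm) // big_ord_recr /= -addnA; congr (_ + _).
have -> : sL m.+2 = sL m.+1 + a m * b m by rewrite sLS hab.
congr (_ + _).
rewrite (eq_big_nat _ _ (F2 := fun x => nat_of_bool (sL m + (x - sL m.+1) %/ b m == y))); last first.
  by move=> x hx; rewrite /gg (gl_in hm) // (sLS m.+1) (hab hm).
by rewrite sum_block // sLS.
Qed.

Lemma cnt_all y n : sL k.+1 <= n -> \sum_(0 <= x < n) (gg x == y) =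
   (y == 0) + LL y + (sL k.+1 <= y < n).
Proof.
move=> hn; rewrite (big_cat_nat _ (n := sL k.+1)) //= cnt_tree //; congr (_ + _).
rewrite (eq_big_nat _ _ (F2 := fun x => nat_of_bool (x == y))) ?sum_eq_ind // => x hx.
rewrite /gg gl_out // => j hj; have := @sL_mono j.+2 k.+1 hj; lia.
Qed.
Hypothesis hk : 0 < k.

Lemma sL_ge1 i : 0 < i -> 1 <= sL i.
Proof. by move=> hi; rewrite -sL1 sL_mono. Qed.

Lemma lvl_uniq i j y : sL i <= y < sL i.+1 -> sL j <= y < sL j.+1 -> i = j.
Proof.
move=> /andP[h1 h2] /andP[h3 h4]; case: (ltngtP i j) => // h.
- have := sL_mono h; lia.
- have := sL_mono h; lia.
Qed.

Lemma LL0 : LL 0 = b 0.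
Proof.
rewrite /LL (bigD1 (Ordinal hk)) //= sL0 sL1 /= muln1 big1 ?addn0 // => i hi.
have : 0 < val i by case: i hi => [[|i] ?] //=; rewrite /eq_op /=.
by move=> /sL_ge1; case: (sL i) => //= ? _; rewrite muln0.
Qed.

Lemma LL_big y : sL k.+1 <= y -> LL y = 0.
Proof.
move=> hy; rewrite /LL big1 // => i _.
have H := @sL_mono i.+1 k.+1 (ltnW (ltn_ord i)); have -> : (y < sL i.+1) = false by apply/negbTE; lia.
by rewrite andbF muln0.
Qed.

Lemma LL_sq y : LL y ^ 2 = \sum_(i < k) b i ^ 2 * (sL i <= y < sL i.+1).
Proof.
case: (boolP [exists i : 'I_k, sL i <= y < sL i.+1]).
- move/existsP => [i0 hi0]; rewrite /LL (bigD1 i0) // [in RHS](bigD1 i0) //= hi0 !big1 ?addn0 ?muln1 //.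
  + move=> j hj; have -> : (sL j <= y < sL j.+1) = false; last by rewrite muln0.
    apply/negbTE/negP => hj'; move/negP: hj; apply; apply/eqP/val_inj.
    exact: (lvl_uniq hj' hi0).
  + move=> j hj; have -> : (sL j <= y < sL j.+1) = false; last by rewrite muln0.
    apply/negbTE/negP => hj'; move/negP: hj; apply; apply/eqP/val_inj.
    exact: (lvl_uniq hj' hi0).
- rewrite negb_exists => /forallP H; rewrite /LL !big1 // => i _;
  by rewrite (negbTE (H i)) muln0.
Qed.

Lemma sumsq_g n : sL k.+1 <= n ->
  \sum_(0 <= y < n) (\sum_(0 <= x < n) (gg x == y)) ^ 2 =
  1 + 2 * b 0 + \sum_(i < k) b i ^ 2 * a i + (n - sL k.+1).
Proof.
move=> hn; have hS := @sL_ge1 k.+1 (ltn0Sn k).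
rewrite (eq_big_nat _ _ (F2 := fun y => (y == 0) * (1 + 2 * b 0) +
   \sum_(i < k) b i ^ 2 * (sL i <= y < sL i.+1) + (sL k.+1 <= y < n))); last first.
  move=> y hy; rewrite cnt_all // -LL_sq.
  case: (eqVneq y 0) => [->|hy0].
  - rewrite LL0 /=; have -> : (sL k.+1 <= 0) = false by apply/negbTE; lia.
    rewrite /= !addn0 sqrnD exp1n !mul1n; lia.
  - case: (leqP (sL k.+1) y) => hyS.
    + rewrite LL_big //; case/andP: hy => _ ->.
      by [].
    + by rewrite /= !addn0 mul0n add0n.
rewrite !big_split /= -big_distrl /= sum_eq_ind.
have -> : (0 <= 0 < n) by lia.
rewrite mul1n sum_ind //; congr (_ + _ + _).
rewrite exchange_big /=; apply: eq_bigr => i _.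
rewrite -big_distrr /= sum_ind ?sL_mono ?sLS //; first by rewrite addKn.
by rewrite -sLS (leq_trans _ hn) // sL_mono //; apply: ltnW (ltn_ord i).
Qed.

Lemma lvl_iter i x : i <= k -> sL i <= x < sL i.+1 -> iter i gg x = 0.
Proof.
elim: i x => [|i IH] x hi hx.
  by rewrite sL0 sL1 in hx; rewrite /=; lia.
rewrite iterSr IH ?(ltnW hi) //.
rewrite /gg (gl_in hi) //; move: hx; rewrite !sLS (hab hi) => hx.
apply/andP; split; first by rewrite leq_addr.
rewrite ltn_add2l ltn_divLR //; lia.
Qed.

Lemma ex_lvl m x : x < sL m -> exists2 i, i < m & sL i <= x < sL i.+1.
Proof.
elim: m => [|m IH]; first by rewrite sL0.
case: (ltnP x (sL m)) => h1 h2; first by case: (IH h1) => i hi hx; exists i => //; lia.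
by exists m => //; rewrite h1.
Qed.

Lemma iter_gg0 m : iter m gg 0 = 0.
Proof. by elim: m => //= m ->; rewrite gg0. Qed.

Lemma iterk_lo x : x < sL k.+1 -> iter k gg x = 0.
Proof.
case/ex_lvl => i hi hx; have -> : k = (k - i) + i by lia.
by rewrite iterD (@lvl_iter i x) ?iter_gg0 // -ltnS.
Qed.

Lemma gg_hi x : sL k.+1 <= x -> gg x = x.
Proof. move=> hx; rewrite /gg gl_out // => j hj; have := @sL_mono j.+2 k.+1 hj; lia. Qed.

Lemma iterk_hi x : sL k.+1 <= x -> iter k gg x = x.
Proof. by move=> hx; elim: k => //= m ->; rewrite gg_hi. Qed.

Lemma sumsq_gk n : sL k.+1 <= n ->
  \sum_(0 <= y < n) (\sum_(0 <= x < n) (iter k gg x == y)) ^ 2 =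
  sL k.+1 ^ 2 + (n - sL k.+1).
Proof.
move=> hn; have hS := @sL_ge1 k.+1 (ltn0Sn k).
rewrite (eq_big_nat _ _ (F2 := fun y => (y == 0) * sL k.+1 ^ 2 + (sL k.+1 <= y < n))); last first.
  move=> y hy; rewrite (big_cat_nat _ (n := sL k.+1)) //=.
  rewrite (eq_big_nat _ _ (F2 := fun x => nat_of_bool (0 == y))); last first.
    by move=> x hx; rewrite iterk_lo //; case/andP: hx.
  rewrite [X in _ + X](eq_big_nat _ _ (F2 := fun x => nat_of_bool (x == y))); last first.
    by move=> x hx; rewrite iterk_hi //; case/andP: hx.
  rewrite sum_nat_const_nat sum_eq_ind subn0 eq_sym.
  case: (eqVneq y 0) => [->|hy0] /=.
  - have -> : (sL k.+1 <= 0) = false by apply/negbTE; lia. by rewrite muln1 /= !addn0 mul1n.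
  - rewrite muln0 add0n /=; case: (_ && _) => //.
rewrite big_split /= -big_distrl /= sum_eq_ind.
have -> : (0 <= 0 < n) by lia.
by rewrite mul1n sum_ind.
Qed.
End Comb.
Lemma pow_succ_bound t m : 0 < t -> (t + 1) ^ m.+1 <= t ^ m.+1 + (2 ^ m.+1 - 1) * t ^ m.
Proof.
move=> ht; elim: m => [|m IH]; first by rewrite !expn1 expn0; lia.
rewrite (expnS (t + 1)) (expnS t m.+1) (expnS 2 m.+1).
have hA : t ^ m <= t ^ m.+1 by rewrite expnS leq_pmull.
have hB : 1 <= 2 ^ m.+1 by rewrite expn_gt0.
move: IH hA hB; set A := t ^ m; set A1 := t ^ m.+1; set B := 2 ^ m.+1; set P := (t + 1) ^ m.+1.
move=> IH hA hB.
have h1 : (t + 1) * P <= (t + 1) * (A1 + (B - 1) * A) by rewrite leq_mul2l IH orbT.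
apply: (leq_trans h1).
have -> : A1 = t * A by rewrite /A1 expnS.
rewrite -/A1 in hA *.
nia.
Qed.

Fixpoint tn K n := match n with
  | 0 => 0
  | n'.+1 => if (tn K n' + 1) ^ K <= n'.+1 then tn K n' + 1 else tn K n' end.

Lemma tn_spec K n : 0 < K -> tn K n ^ K <= n < (tn K n + 1) ^ K.
Proof.
move=> hK; elim: n => [|n IH] /=.
  by rewrite exp0n // add0n exp1n.
case: ifP => h.
- rewrite h /=; have : (tn K n + 1) ^ K < (tn K n + 1 + 1) ^ K by rewrite ltn_exp2r //; lia.
  lia.
- move/negbT: h; rewrite -ltnNge => h; lia.
Qed.

Lemma tn_big K m n : 0 < K -> m ^ K <= n -> m <= tn K n.
Proof.
move=> hK hm; have := tn_spec n hK => /andP[_ h].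
have : m ^ K < (tn K n + 1) ^ K by lia.
rewrite ltn_exp2r //; lia.
Qed.

Section Param.
Variables (k t : nat).
Hypotheses (hk : 1 < k) (ht : 0 < t).

Definition KK := 2 ^ k.
Definition pa i := t ^ (KK - 2 ^ (k - i)).
Definition pb i := t ^ (2 ^ (k - i.+1)).
Definition MM := t ^ (KK - 2).

Lemma KK_ge4 : 4 <= KK.
Proof. by rewrite /KK (leq_trans _ (leq_pexp2l _ hk)). Qed.

Lemma pa0 : pa 0 = 1.
Proof. by rewrite /pa subn0 subnn expn0. Qed.

Lemma pow_split i : i < k -> 2 ^ (k - i) = 2 * 2 ^ (k - i.+1) /\ 2 ^ (k - i) <= KK.
Proof.
move=> hi; have -> : k - i = (k - i.+1).+1 by lia.
split; first by rewrite expnS.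
rewrite /KK leq_pexp2l //; lia.
Qed.

Lemma pab i : i < k -> pa i.+1 = pa i * pb i.
Proof.
move=> hi; rewrite /pa /pb -expnD; congr (t ^ _).
have [h1 h2] := pow_split hi; lia.
Qed.

Lemma pb_gt0 i : 0 < pb i.
Proof. by rewrite expn_gt0 ht. Qed.

Lemma psum : \sum_(i < k) pb i ^ 2 * pa i = k * t ^ KK.
Proof.
rewrite (eq_bigr (fun=> t ^ KK)); first by rewrite sum_nat_const card_ord.
move=> i _; rewrite /pa /pb -expnM -expnD; congr (t ^ _).
have [h1 h2] := pow_split (ltn_ord i); lia.
Qed.

Lemma pak : pa k = t * MM.
Proof.
rewrite /pa /MM subnn expn0 -expnS; congr (t ^ _); have := KK_ge4; lia.
Qed.

Lemma tK : t ^ KK = t * (t * MM).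
Proof. rewrite /MM -!expnS; congr (t ^ _); have := KK_ge4; lia. Qed.

Lemma tK1 : t ^ (KK.-1) = t * MM.
Proof. rewrite /MM -expnS; congr (t ^ _); have := KK_ge4; lia. Qed.

Lemma pa_small i : i < k -> pa i <= MM.
Proof.
move=> hi; rewrite /pa /MM leq_pexp2l //.
have [h1 h2] := pow_split hi; have : 0 < 2 ^ (k - i.+1) by rewrite expn_gt0.
lia.
Qed.

Lemma pb0 : pb 0 <= t * MM.
Proof.
rewrite /pb /MM -expnS leq_pexp2l //.
have [h1 h2] := pow_split (ltnW hk); have : 0 < 2 ^ (k - 1) by rewrite expn_gt0.
rewrite subn0 in h1 h2; have := KK_ge4; lia.
Qed.

Lemma t_le_M : t <= MM.
Proof. rewrite /MM -{1}(expn1 t) leq_pexp2l //; have := KK_ge4; lia. Qed.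

End Param.

Section Param2.
Variables (k t : nat).
Hypotheses (hk : 1 < k) (ht : 0 < t).

Lemma S_lo : t * MM k t <= sL (pa k t) k.+1.
Proof. by rewrite sLS -pak // leq_addl. Qed.

Lemma S_hi : sL (pa k t) k.+1 <= t * MM k t + k * MM k t.
Proof.
rewrite sLS pak // addnC leq_add2l /sL.
rewrite -[k in X in _ <= X * _]card_ord -sum_nat_const leq_sum // => i _.
exact: pa_small.
Qed.
End Param2.
Lemma degf_ineq1 k t M n S b0 D :
  0 < t -> t <= M -> t * (t * M) <= n -> t * M <= S -> S <= t * M + k * M -> S <= n -> b0 <= t * M ->
  (1 + 2 * b0 + k * (t * (t * M)) + (n - S)) * t <= k.+1 * n * t + (k * D + k + 4) * n.
Proof.
move=> ht htM hN hS1 hS2 hSn hb0.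
have h1 : (1 + 2 * b0) * t <= 3 * n.
  have h0 : 1 <= t * M by rewrite muln_gt0 ht (leq_trans ht htM).
  have h01 : (1 + 2 * b0) * t <= 3 * (t * M) * t by rewrite leq_mul2r; lia.
  have h02 : 3 * (t * M) * t = 3 * (t * (t * M)) by rewrite -mulnA (mulnC (t * M) t).
  lia.
have h2 : k * (t * (t * M)) * t <= k * n * t by rewrite leq_mul2r leq_mul2l hN !orbT.
have h3 : (n - S) * t <= n * t by rewrite leq_mul2r leq_subr orbT.
nia.
Qed.

Lemma degf_ineq2 k t M n S b0 D :
  0 < t -> t <= M -> t * (t * M) <= n -> n <= t * (t * M) + D * (t * M) ->
  t * M <= S -> S <= t * M + k * M -> S <= n ->
  k.+1 * n * t <= (1 + 2 * b0 + k * (t * (t * M)) + (n - S)) * t + (k * D + k + 4) * n.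
Proof.
move=> ht htM hN hn hS1 hS2 hSn.
set N := t * (t * M).
have e1 : D * (t * M) * t = D * N by rewrite /N -mulnA (mulnC (t * M) t).
have h1 : n * t <= N * t + D * n.
  have : n * t <= (N + D * (t * M)) * t by rewrite leq_mul2r hn orbT.
  rewrite mulnDl e1 => h; apply: (leq_trans h); rewrite leq_add2l leq_mul2l hN orbT //.
have h2 : k * (n * t) <= k * (N * t) + k * (D * n).
  by rewrite -mulnDr leq_mul2l h1 orbT.
have h3 : S * t <= k.+1 * n.
  have : S * t <= (t * M + k * M) * t by rewrite leq_mul2r hS2 orbT.
  have e2 : (t * M + k * M) * t = N + k * (t * M) by rewrite /N mulnDl mulnC -mulnA (mulnC M t).
  have : t * M <= N by rewrite /N leq_pmull.
  nia.
have h4 : n * t = (n - S) * t + S * t by rewrite -mulnDl subnK.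
nia.
Qed.

Lemma degk_ineq1 k t M n S D :
  0 < t -> t <= M -> n <= t * (t * M) + D * (t * M) ->
  S <= t * M + k * M ->
  (S ^ 2 + (n - S)) * t <= t * (t * M) * M * (t + (k * k + 2 * k + 3 * D + 1)).
Proof.
move=> ht htM hn hS.
have hS2 : S ^ 2 <= M * M * ((t + k) * (t + k)).
  have : S <= M * (t + k) by rewrite mulnDr (mulnC M t) (mulnC M k).
  move=> h; rewrite -mulnn; have := leq_mul h h; nia.
have hn2 : n * t <= t * t * M * M * (1 + D).
  have : n <= t * M * (t + D) by rewrite mulnDr (mulnC (t * M) t) (mulnC (t * M) D).
  move=> h; have : t + D <= M * (1 + D) by nia.
  nia.
have hS3 : M * M * ((t + k) * (t + k)) * t <= t * t * M * M * (t + (2 * k + k * k)).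
  have e : (t + k) * (t + k) * t <= t * t * (t + (2 * k + k * k)).
    have : k * k * t <= k * k * (t * t) by rewrite leq_mul2l leq_pmull ?orbT.
    nia.
  have := leq_mul (leqnn (M * M)) e; nia.
have hA : S ^ 2 * t <= M * M * ((t + k) * (t + k)) * t by rewrite leq_mul2r hS2 orbT.
have hB : (n - S) * t <= n * t by rewrite leq_mul2r leq_subr orbT.
have hC : t * t * M * M * (t + (2 * k + k * k)) + t * t * M * M * (1 + D) <=
   t * (t * M) * M * (t + (k * k + 2 * k + 3 * D + 1)).
  have -> : t * (t * M) * M = t * t * M * M by rewrite !mulnA.
  rewrite -mulnDr leq_mul2l; apply/orP; right; lia.
rewrite mulnDl; lia.
Qed.

Lemma cube_ineq t C D : 2 * D <= C -> C < t -> (t + D) * (t + D) * (t - C) <= t * t * t.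
Proof.
move=> hCD hCt; have -> : t = (t - C) + C by lia.
set u := t - C; rewrite addnK.
have h1 : 2 * (C + D) * (u * u) <= 3 * C * (u * u) by rewrite leq_mul2r; lia.
have h2 : (C + D) * (C + D) <= 3 * (C * C) by nia.
have h3 : (C + D) * (C + D) * u <= 3 * (C * C) * u by rewrite leq_mul2r h2 orbT.
nia.
Qed.

Lemma degk_ineq2 t M n S D C :
  0 < t -> n <= t * (t * M) + D * (t * M) -> t * M <= S -> 2 * D <= C -> C < t ->
  n * n * M * (t - C) <= t * (t * M) * (S ^ 2 + (n - S)) * t.
Proof.
move=> ht hn hS hCD hCt.
have h1 : n <= t * M * (t + D) by rewrite mulnDr (mulnC (t * M) t) (mulnC (t * M) D).
have h2 : n * n <= (t * M) * (t * M) * ((t + D) * (t + D)) by have := leq_mul h1 h1; nia.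
have h3 : (t * M) * (t * M) <= S ^ 2 by rewrite -mulnn leq_mul.
have h4 := @cube_ineq t C D hCD hCt.
have h5 : n * n * M * (t - C) <= (t * M) * (t * M) * M * ((t + D) * (t + D) * (t - C)).
  have := leq_mul (leq_mul h2 (leqnn M)) (leqnn (t - C)); nia.
apply: (leq_trans h5).
have h6 : (t * M) * (t * M) * M * ((t + D) * (t + D) * (t - C)) <= (t * M) * (t * M) * M * (t * t * t).
  by rewrite leq_mul2l h4 orbT.
apply: (leq_trans h6).
have h7 : t * (t * M) * ((t * M) * (t * M)) * t <= t * (t * M) * (S ^ 2 + (n - S)) * t.
  by rewrite leq_mul2r leq_mul2l (leq_trans h3) ?leq_addr ?orbT.
apply: leq_trans h7; nia.
Qed.

Local Open Scope classical_set_scope.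
Local Open Scope ring_scope.
Lemma ratio_bound (R : realFieldType) (x n t C L : R) : 0 < n -> 0 < t ->
  x * t <= L * n * t + C * n -> L * n * t <= x * t + C * n -> `|x / n - L| <= C / t.
Proof.
move=> hn ht h1 h2; have hnt : 0 < n * t by rewrite mulr_gt0.
rewrite ler_norml; apply/andP; split.
- rewrite -(ler_pM2r hnt).
  have -> : (- (C / t)) * (n * t) = - (C * n) by field; rewrite gt_eqF.
  have -> : (x / n - L) * (n * t) = x * t - L * n * t by field; rewrite gt_eqF.
  lra.
- rewrite -(ler_pM2r hnt).
  have -> : (C / t) * (n * t) = C * n by field; rewrite gt_eqF.
  have -> : (x / n - L) * (n * t) = x * t - L * n * t by field; rewrite gt_eqF.
  lra.
Qed.

Lemma ratio_bound2 (R : realFieldType) (Y n t C P N M : R) :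
  0 <= C -> 0 < n -> 0 < t -> 0 < N -> 0 <= M -> 0 <= Y -> 0 < P -> 
  N * M <= n * P -> P * N <= n * M ->
  Y * t <= N * M * (t + C) ->
  (C < t -> n * n * M * (t - C) <= N * Y * t) ->
  `|Y / n / P - 1| <= C / t.
Proof.
move=> hC hn ht hN hM hY hP h1 h2 h3 h4.
have hnP : 0 < n * P by rewrite mulr_gt0.
have hnPt : 0 < n * P * t by rewrite mulr_gt0.
rewrite ler_norml; apply/andP; split.
- rewrite -(ler_pM2r hnPt).
  have -> : (- (C / t)) * (n * P * t) = - (C * n * P) by field; rewrite gt_eqF.
  have -> : (Y / n / P - 1) * (n * P * t) = Y * t - n * P * t
    by field; rewrite ?gt_eqF ?hP ?hn.
  case: (ltP C t) => hCt.
  + have := h4 hCt => h5.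
    have h6 : n * P * (t - C) * N <= n * n * M * (t - C).
      have -> : n * P * (t - C) * N = n * (t - C) * (P * N) by ring.
      have -> : n * n * M * (t - C) = n * (t - C) * (n * M) by ring.
      by rewrite ler_pM2l // mulr_gt0 // subr_gt0.
    have h7 : n * P * (t - C) <= Y * t.
      rewrite -(ler_pM2r hN); apply: (le_trans h6); rewrite (le_trans h5) //.
      by rewrite le_eqVlt; apply/orP; left; apply/eqP; ring.
    lra.
  + have : 0 <= Y * t by rewrite mulr_ge0 // ltW.
    have : n * P * t <= n * P * C by rewrite ler_pM2l.
    lra.
- rewrite -(ler_pM2r hnPt).
  have -> : (C / t) * (n * P * t) = C * n * P by field; rewrite gt_eqF.
  have -> : (Y / n / P - 1) * (n * P * t) = Y * t - n * P * t
    by field; rewrite ?gt_eqF ?hP ?hn.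
  have h8 : N * M * (t + C) <= n * P * (t + C) by rewrite ler_wpM2r //; lra.
  lra.
Qed.

Lemma cvg_bound (R : realType) (u : nat -> R) (L C : R) (t : nat -> nat) (m0 : nat) :
  (forall m, exists n0, forall n, (n0 <= n)%N -> (m <= t n)%N) ->
  (forall n, (m0 <= t n)%N -> `|u n - L| <= C / (t n)%:R) ->
  u n @[n --> \oo] --> L.
Proof.
move=> ht hb; apply/cvgrPdist_le => e e0.
have [n0 hn0] := ht (maxn (maxn m0 1) (Num.truncn (C / e)).+1).
exists n0 => // n /= hn.
have := hn0 n hn; rewrite !geq_max => /andP[/andP[h0 h1] h2].
rewrite distrC (le_trans (hb n h0)) //.
have tpos : (0 < (t n)%:R :> R) by rewrite ltr0n.
rewrite ler_pdivrMr //.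
have : C / e < (t n)%:R by rewrite (lt_le_trans (truncnS_gt _)) // ler_nat.
rewrite ltr_pdivrMr // => /ltW; by rewrite mulrC.
Qed.

Lemma deg_val (R : realType) n (h : 'I_n -> 'I_n) (H : nat -> nat) :
  (forall x, val (h x) = H (val x)) ->
  deg R h = (\sum_(0 <= y < n) (\sum_(0 <= x < n) (H x == y)) ^ 2)%N%:R / n%:R.
Proof.
move=> hH; rewrite /deg card_ord; congr (_ / _).
rewrite natr_sum big_mkord; apply: eq_bigr => y _.
rewrite natrX; congr (_ ^+ 2); congr (_%:R).
rewrite -sum1_card big_mkord big_mkcond /=; apply: eq_bigr => x _.
by rewrite inE -val_eqE /= hH; case: (_ == _).
Qed.

Lemma powR_facts (R : realType) k t n : (1 < k)%N -> (0 < t)%N -> (t ^ KK k <= n)%N ->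
  (MM k t)%:R <= (n%:R : R) `^ (1 - (2 ^+ (k - 1))^-1) /\
  (n%:R : R) `^ (1 - (2 ^+ (k - 1))^-1) * (t ^ KK k)%:R <= n%:R * (MM k t)%:R.
Proof.
move=> hk ht hn.
set a := (1 - (2 ^+ (k - 1))^-1 : R).
have hX : (1 : R) <= 2 ^+ (k - 1) by rewrite exprn_ege1 // ler1n.
have hX0 : (0 : R) < 2 ^+ (k - 1) by rewrite (lt_le_trans ltr01).
have ha0 : 0 <= a by rewrite subr_ge0 invf_le1.
have ha1 : a <= 1 by rewrite lerBlDr lerDl invr_ge0 ltW.
have hK2 : (2 <= KK k)%N by have := KK_ge4 hk; lia.
have eKa : (KK k)%:R * a = (KK k - 2)%:R :> R.
  rewrite natrB // /KK natrX.
  have e2 : (2%:R : R) ^+ k = 2 * 2 ^+ (k - 1) by rewrite -exprS; congr (_ ^+ _); lia.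
  by rewrite e2 /a; field; rewrite gt_eqF.
have hN : ((t ^ KK k)%:R : R) `^ a = (MM k t)%:R.
  by rewrite natrX -powR_mulrn ?ler0n // -powRrM eKa powR_mulrn ?ler0n // -natrX.
have hNpos : (0 : R) < (t ^ KK k)%:R by rewrite ltr0n expn_gt0 ht.
have hMpos : (0 : R) < (MM k t)%:R by rewrite ltr0n expn_gt0 ht.
split.
- rewrite -hN; apply: ge0_ler_powR => //; rewrite ?nnegrE ?ler0n ?ler_nat //.
- set N := ((t ^ KK k)%:R : R).
  have en : (n%:R : R) = (n%:R / N) * N by rewrite divfK // gt_eqF.
  rewrite {1}en powRM ?hN; last 2 first.
  + by rewrite divr_ge0 ?ler0n ?ltW.
  + by rewrite ltW.
  have hq : 1 <= n%:R / N by rewrite ler_pdivlMr // mul1r ler_nat.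
  have h := ler1_powR hq ha1.
  apply: (le_trans (y := n%:R / N * (MM k t)%:R * N)).
    by rewrite ler_pM2r // ler_pM2r.
  by rewrite -mulrA (mulrC _ N) mulrA divfK // gt_eqF.
Qed.

Lemma iter_val n (F : 'I_n -> 'I_n) (H : nat -> nat) :
  (forall x, val (F x) = H (val x)) -> forall m x, val (iter m F x) = iter m H (val x).
Proof. by move=> hF; elim=> // m IH x /=; rewrite hF IH. Qed.

Theorem mainTheorem3 (R : realType) (k : nat) (hk : (2 <= k)%N) :
  exists (X : nat -> finType) (f : forall n : nat, X n -> X n),
    (forall n : nat, #|X n| = n) /\
    (deg R (f n) @[n --> \oo] --> ((k.+1)%:R : R)) /\
    (deg R (iter k (f n)) / ((n%:R : R) `^ (1 - (2 ^+ (k - 1))^-1))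
       @[n --> \oo] --> (1 : R)).
Proof.
have hK : (0 < KK k)%N by rewrite /KK expn_gt0.
pose T n := tn (KK k) n.
pose G n := gg k (pa k (T n)) (pb k (T n)).
exists (fun n => fintype_ordinal__canonical__fintype_Finite n).
exists (fun n (x : 'I_n) => (Ordinal (leq_ltn_trans (gl_le (pa k (T n)) (pb k (T n)) k (val x)) (ltn_ord x)) : 'I_n)).
split; first by move=> n; rewrite card_ord.
have Tinf : forall m, exists n0, forall n, (n0 <= n)%N -> (m <= T n)%N.
  by move=> m; exists (m ^ KK k)%N => n hn; apply: tn_big.
set D := (2 ^ KK k - 1)%N.
have facts : forall n, (k.+1 <= T n)%N -> [/\ (0 < T n)%N,
    (T n * (T n * MM k (T n)) <= n)%N,
    (n <= T n * (T n * MM k (T n)) + D * (T n * MM k (T n)))%N &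
    (sL (pa k (T n)) k.+1 <= n)%N].
  move=> n hT; have ht : (0 < T n)%N by lia.
  have /andP[h1 h2] : (T n ^ KK k <= n < (T n + 1) ^ KK k)%N := tn_spec n hK.
  have hb := pow_succ_bound (KK k).-1 ht.
  rewrite prednK // -/D (tK1 hk ht) (tK hk ht) in hb.
  rewrite (tK hk ht) in h1.
  split => //; first by lia.
  have hS := S_hi hk ht; have hM := t_le_M hk ht.
  have : (T n * MM k (T n) + k * MM k (T n) <= T n * (T n * MM k (T n)))%N.
    have : (k.+1 * MM k (T n) <= T n * MM k (T n))%N by rewrite leq_mul2r hT orbT.
    have : (MM k (T n) <= T n * MM k (T n))%N by rewrite leq_pmull.
    nia.
  lia.
split.
- apply: (@cvg_bound R _ _ (k * D + k + 4)%:R T k.+1 Tinf) => n hT.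
  have [ht hN hn hS] := facts n hT.
  have npos : (0 < n)%N by rewrite (leq_trans _ hN) // !muln_gt0 ht expn_gt0 ht.
  rewrite (@deg_val R n _ (G n)) //.
  rewrite sumsq_g //; last 4 first.
  + exact: pa0.
  + by move=> i; apply: pab.
  + exact: pb_gt0.
  + lia.
  rewrite psum // tK //.
  apply: ratio_bound; [by rewrite ltr0n | by rewrite ltr0n | |].
  + rewrite -!natrM -!natrD ler_nat.
    apply: degf_ineq1 => //; [exact: t_le_M | exact: S_lo | exact: S_hi | exact: pb0].
  + rewrite -!natrM -!natrD ler_nat.
    apply: degf_ineq2 => //; [exact: t_le_M | exact: S_lo | exact: S_hi].
- apply: (@cvg_bound R _ _ (k * k + 2 * k + 3 * D + 1)%:R T k.+1 Tinf) => n hT.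
  have [ht hN hn hS] := facts n hT.
  have npos : (0 < n)%N by rewrite (leq_trans _ hN) // !muln_gt0 ht expn_gt0 ht.
  rewrite (@deg_val R n _ (iter k (G n))); last first.
    by apply: iter_val.
  rewrite sumsq_gk //; last 4 first.
  + exact: pa0.
  + by move=> i; apply: pab.
  + exact: pb_gt0.
  + lia.
  have hN' : (T n ^ KK k <= n)%N by rewrite tK.
  have [hP1 hP2] := powR_facts R hk ht hN'.
  apply: (@ratio_bound2 R _ _ _ _ _ ((T n ^ KK k)%:R) (MM k (T n))%:R).
  + by rewrite ler0n.
  + by rewrite ltr0n.
  + by rewrite ltr0n.
  + by rewrite ltr0n expn_gt0 ht.
  + by rewrite ler0n.
  + by rewrite ler0n.
  + by rewrite powR_gt0 // ltr0n.
  + by rewrite ler_pM // ?ler0n // ler_nat tK.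
  + exact: hP2.
  + rewrite -!natrD -!natrM ler_nat tK //.
    apply: degk_ineq1 => //; [exact: t_le_M | exact: S_hi].
  + move=> hCt; rewrite -natrB; last by move: hCt; rewrite ltr_nat => /ltnW.
    rewrite -!natrM ler_nat tK //.
    apply: (degk_ineq2 (D := D)) => //; [exact: S_lo | lia | by move: hCt; rewrite ltr_nat].
Qed.
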